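(* Let $\lambda\in\mathcal O$ be a nonzero limit ordinal and $\mathcal A,\mathcal B:\mathcal O\to\mathrm{SAT}$. Then $$\limsup_{\alpha\to\lambda}\big(\mathcal A(\alpha)\Rightarrow\mathcal B(\alpha)\big)\subseteq\Big(\liminf_{\lambda}\mathcal A\Big)\Rightarrow\Big(\limsup_{\lambda}\mathcal B\Big).$$
   Context: $\mathcal O$ is the set of ordinals $\le\top_{\mathsf{ord}}$ for a fixed ordinal $\top_{\mathsf{ord}}$ ($=\beth_\omega$). For $f:\mathcal O\to\mathfrak L$ into a complete lattice and a nonzero limit $\lambda$: $\liminf_{\alpha\to\lambda}f(\alpha)=\sup_{\alpha_0<\lambda}\inf_{\alpha_0\le\alpha<\lambda}f(\alpha)$, $\limsup_{\alpha\to\lambda}f(\alpha)=\inf_{\alpha_0<\lambda}\sup_{\alpha_0\le\alpha<\lambda}f(\alpha)$. Terms of an untyped lambda calculus with constants: $r,s,t::=c\mid x\mid\lambda x\,t\mid r\,s$ (constants $\langle\rangle,\mathsf{pair},\mathsf{fst},\mathsf{snd},\mathsf{inl},\mathsf{inr},\mathsf{case},\mathsf{in},\mathsf{out},\mathsf{fix}^\mu_n,\mathsf{fix}^\nu_n$). $\mathrm{SAT}$ denotes the set of saturated sets of terms (sets of strongly normalizing terms containing all neutral terms and closed under weak-head expansion); it is a complete lattice ordered by $\subseteq$ in which infima and suprema of nonempty families are intersection and union; $\liminf,\limsup$ are computed in it. For $\mathcal A,\mathcal B\in\mathrm{SAT}$, the saturated set $\mathcal A\Rightarrow\mathcal B:=\bigcap_{s\in\mathcal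 A}(\_\,s)^{-1}\mathcal B=\{r\mid r\,s\in\mathcal B\text{ for all }s\in\mathcal A\}$ (with $\bigcap_{s\in\emptyset}$ read as the set of all strongly normalizing terms). *)

(* Defs.v *)
From Stdlib Require Import Arith List.
Import ListNotations.

Inductive const : Type :=
| CUnit | CPair | CFst | CSnd | CInl | CInr | CCase | CIn | COut
| CFixMu (n : nat) | CFixNu (n : nat).

Inductive tm : Type :=
| C (c : const)
| Var (x : nat)
| Lam (t : tm)
| App (r s : tm).

Fixpoint lift (d c : nat) (t : tm) : tm :=
  match t with
  | C k => C k
  | Var x => if x <? c then Var x else Var (x + d)
  | Lam t => Lam (lift d (S c) t)
  | App r s => App (lift d c r) (lift d c s)
  end.

Fixpoint subst (k : nat) (s : tm) (t : tm) : tm :=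
  match t with
  | C c => C c
  | Var x => if x <? k then Var x
             else if x =? k then lift k 0 s
             else Var (x - 1)
  | Lam t => Lam (subst (S k) s t)
  | App r u => App (subst k s r) (subst k s u)
  end.

Definition apps (h : tm) (ts : list tm) : tm := fold_left App ts h.

Inductive contr : tm -> tm -> Prop :=
| c_beta t s : contr (App (Lam t) s) (subst 0 s t)
| c_fst r s : contr (App (C CFst) (App (App (C CPair) r) s)) r
| c_snd r s : contr (App (C CSnd) (App (App (C CPair) r) s)) s
| c_case_inl r s t :
    contr (App (App (App (C CCase) (App (C CInl) r)) s) t) (App s r)
| c_case_inr r s t :
    contr (App (App (App (C CCase) (App (C CInr) r)) s) t) (App t r)
| c_out r : contr (App (C COut) (App (C CIn) r)) r
| c_fixmu n s ts r : length ts = n ->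
    contr (App (apps (C (CFixMu n)) (s :: ts)) (App (C CIn) r))
          (App (apps s (App (C (CFixMu n)) s :: ts)) (App (C CIn) r))
| c_fixnu n s ts : length ts = n ->
    contr (App (C COut) (apps (C (CFixNu n)) (s :: ts)))
          (App (C COut) (apps s (App (C (CFixNu n)) s :: ts))).

Inductive step : tm -> tm -> Prop :=
| st_contr r r' : contr r r' -> step r r'
| st_lam t t' : step t t' -> step (Lam t) (Lam t')
| st_appl r r' s : step r r' -> step (App r s) (App r' s)
| st_appr r s s' : step s s' -> step (App r s) (App r s').

Inductive SN (t : tm) : Prop :=
| SN_intro : (forall t', step t t' -> SN t') -> SN t.

(** eliminations whose principal argument is their first argument *)
Definition is_elim (c : const) : Prop :=
  c = CFst \/ c = CSnd \/ c = CCase \/ c = COut.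

(** weak-head reduction: contraction inside an evaluation context
    E ::= [] | E s | fst E | snd E | case E | out E | fix^mu_n s t1..tn E *)
Inductive whstep : tm -> tm -> Prop :=
| wh_contr r r' : contr r r' -> whstep r r'
| wh_appl r r' s : whstep r r' -> whstep (App r s) (App r' s)
| wh_elim c r r' : is_elim c -> whstep r r' -> whstep (App (C c) r) (App (C c) r')
| wh_fix n s ts r r' : length ts = n -> whstep r r' ->
    whstep (App (apps (C (CFixMu n)) (s :: ts)) r)
           (App (apps (C (CFixMu n)) (s :: ts)) r').

(** neutral terms: a variable in an evaluation context *)
Inductive neutral : tm -> Prop :=
| ne_var x : neutral (Var x)
| ne_app r s : neutral r -> neutral (App r s)
| ne_elim c r : is_elim c -> neutral r -> neutral (App (C c) r)
| ne_fix n s ts r : length ts = n -> neutral r ->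
    neutral (App (apps (C (CFixMu n)) (s :: ts)) r).

Definition tset := tm -> Prop.

Record saturated (A : tset) : Prop := {
  sat_SN : forall t, A t -> SN t;
  sat_neutral : forall t, neutral t -> SN t -> A t;
  sat_whexp : forall t t', whstep t t' -> A t' -> SN t -> A t
}.

(** A => B := intersection over s in A of (_ s)^{-1} B,
    the empty intersection being the set of all SN terms *)
Definition arrow (A B : tset) : tset :=
  fun r => (forall s, A s -> B (App r s)) /\ ((~ exists s, A s) -> SN r).

(** * Ordinals: an arbitrary well-ordered type *)
Definition is_wellorder {O : Type} (lt : O -> O -> Prop) : Prop :=
  (forall a, ~ lt a a) /\
  (forall a b c, lt a b -> lt b c -> lt a c) /\
  (forall a b, lt a b \/ a = b \/ lt b a) /\
  well_founded lt.

Definition nonzero_limit {O : Type} (lt : O -> O -> Prop) (lam : O) : Prop :=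
  (exists a, lt a lam) /\ (forall a, lt a lam -> exists b, lt a b /\ lt b lam).

Definition le_of {O : Type} (lt : O -> O -> Prop) (a b : O) : Prop :=
  a = b \/ lt a b.

(** liminf / limsup in SAT, where infima / suprema of the (nonempty)
    families involved are intersections / unions *)
Definition liminf {O : Type} (lt : O -> O -> Prop) (lam : O) (f : O -> tset) : tset :=
  fun t => exists a0, lt a0 lam /\
    forall a, le_of lt a0 a -> lt a lam -> f a t.

Definition limsup {O : Type} (lt : O -> O -> Prop) (lam : O) (f : O -> tset) : tset :=
  fun t => forall a0, lt a0 lam ->
    exists a, le_of lt a0 a /\ lt a lam /\ f a t.

(* Main.v *)
Require Import Defs.

Lemma sn_var x : SN (Var x).
Proof.
  constructor. intros t' H. inversion H; subst. inversion H0.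
Qed.

Theorem theorem4p7 (O : Type) (lt : O -> O -> Prop) (Hwo : is_wellorder lt)
  (lam : O) (Hlam : nonzero_limit lt lam) (A B : O -> tset)
  (HA : forall a, saturated (A a)) (HB : forall a, saturated (B a)) :
  forall r, limsup lt lam (fun a => arrow (A a) (B a)) r ->
    arrow (liminf lt lam A) (limsup lt lam B) r.
Proof.
  destruct Hwo as [Hirr [Htr [Htri _]]].
  intros r Hr. split.
  - intros s [a0 [Ha0 Hs]] b0 Hb0.
    assert (Hc : exists c, le_of lt a0 c /\ le_of lt b0 c /\ lt c lam).
    { destruct (Htri a0 b0) as [H|[H|H]].
      - exists b0. unfold le_of. auto.
      - subst. exists b0. unfold le_of. auto.
      - exists a0. unfold le_of. auto. }
    destruct Hc as [c [Hac [Hbc Hc]]].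
    destruct (Hr c Hc) as [a [Hca [Hal Harr]]].
    assert (le_of lt a0 a /\ le_of lt b0 a) as [H1 H2].
    { unfold le_of in *.
      destruct Hca as [<-|Hca]; [auto|].
      split; right.
      - destruct Hac as [<-|Hac]; eauto.
      - destruct Hbc as [<-|Hbc]; eauto. }
    exists a. split; [exact H2|]. split; [exact Hal|].
    apply (proj1 Harr). apply Hs; assumption.
  - intros Hn. exfalso. apply Hn. exists (Var 0).
    destruct Hlam as [[a0 Ha0] _]. exists a0. split; [exact Ha0|].
    intros a _ _. apply (sat_neutral _ (HA a)). constructor. apply sn_var.
Qed.
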